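(* Let $p\in[1,\infty)$, $q\in[1,\infty]$, integers $s_1,s_2,m_1,n\ge1$, $\epsilon\in\{-1,+1\}^n$, points $x_1,\dots,x_n\in\mathbb{R}^{m_1}$ and any function $g:\mathbb{R}^{m_1}\to\mathbb{R}^{s_1}$. Then $$\sup_{0\neq V\in\mathbb{R}^{s_1\times s_2}}\frac{1}{\|V\|_{p,q}}\Big\|\sum_{i=1}^n\epsilon_i\,\sigma\circ\big(V^Tg(x_i)\big)\Big\|_{p^*}=s_2^{[\frac1{p^*}-\frac1q]_+}\sup_{0\ne v\in\mathbb{R}^{s_1}}\frac1{\|v\|_p}\Big|\sum_{i=1}^n\epsilon_i\,\sigma\big(\langle v,g(x_i)\rangle\big)\Big|.$$
   Context: $p^*\in(1,\infty]$ is defined by $1/p+1/p^*=1$; $[x]_+=\max(x,0)$. $\sigma(u)=\max(u,0)$, applied coordinatewise to vectors. For a real $s_1\times s_2$ matrix $A=(a_{ij})$: $\|A\|_{p,q}=\big(\sum_{j=1}^{s_2}(\sum_{i=1}^{s_1}|a_{ij}|^p)^{q/p}\big)^{1/q}$ for $q<\infty$, and $\|A\|_{p,\infty}=\max_j(\sum_{i}|a_{ij}|^p)^{1/p}$. *)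

(* Defs.v *)
From Stdlib Require Export Reals List.
Export ListNotations.
Open Scope R_scope.

Definition Rsum (n : nat) (f : nat -> R) : R :=
  fold_right Rplus 0 (map f (seq 0 n)).

(* max_{i<n} f i  (used on nonnegative values; 0 for n = 0) *)
Definition Rmaxn (n : nat) (f : nat -> R) : R :=
  fold_right Rmax 0 (map f (seq 0 n)).

Definition rpow (x y : R) : R :=
  if Rle_dec x 0 then 0 else Rpower x y.

Definition relu (u : R) : R := Rmax u 0.

(* extended exponent in [1, oo]: None = oo *)
Definition extR := option R.

Definition pnorm (p : R) (n : nat) (f : nat -> R) : R :=
  rpow (Rsum n (fun i => rpow (Rabs (f i)) p)) (1 / p).

Definition supnorm (n : nat) (f : nat -> R) : R :=
  Rmaxn n (fun i => Rabs (f i)).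

Definition qnorm (q : extR) (n : nat) (f : nat -> R) : R :=
  match q with
  | Some q' => pnorm q' n f
  | None => supnorm n f
  end.

Definition conj_exp (p : R) : extR :=
  if Req_EM_T p 1 then None else Some (p / (p - 1)).

Definition inv_ext (q : extR) : R :=
  match q with Some q' => 1 / q' | None => 0 end.

(* mixed norm ||A||_{p,q} of an s1 x s2 matrix A (A i j, i < s1, j < s2):
   q-norm over columns j of the p-norm of column j *)
Definition mixed_norm (p : R) (q : extR) (s1 s2 : nat) (A : nat -> nat -> R) : R :=
  qnorm q s2 (fun j => pnorm p s1 (fun i => A i j)).

Definition pos_part (x : R) : R := Rmax x 0.

(* Main.v *)
Require Import Defs.
From Stdlib Require Import Reals List Lra Lia FunctionalExtensionality Classical.
Open Scope R_scope.

Lemma Rpower_pos x y : 0 < Rpower x y.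
Proof. unfold Rpower; apply exp_pos. Qed.

Lemma rpow_ge0 x y : 0 <= rpow x y.
Proof. unfold rpow; destruct (Rle_dec x 0); [lra|]; left; apply Rpower_pos. Qed.

Lemma rpow_0 y : rpow 0 y = 0.
Proof. unfold rpow; destruct (Rle_dec 0 0); lra. Qed.

Lemma rpow_pos x y : 0 < x -> rpow x y = Rpower x y.
Proof. intros; unfold rpow; destruct (Rle_dec x 0); [lra|auto]. Qed.

Lemma rpow_gt0 x y : 0 < x -> 0 < rpow x y.
Proof. intros; rewrite rpow_pos; auto; apply Rpower_pos. Qed.

Lemma rpow_mul x y a : 0 <= x -> 0 <= y -> rpow (x*y) a = rpow x a * rpow y a.
Proof.
  intros hx hy. destruct hx as [hx|hx]; [|subst; rewrite Rmult_0_l, !rpow_0; ring].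
  destruct hy as [hy|hy]; [|subst; rewrite Rmult_0_r, !rpow_0; ring].
  rewrite !rpow_pos; try nra. now rewrite Rpower_mult_distr.
Qed.

Lemma rpow_rpow x a b : 0 <= x -> rpow (rpow x a) b = rpow x (a*b).
Proof.
  intros [hx|hx]; [|subst; rewrite !rpow_0; auto].
  rewrite (rpow_pos x a), rpow_pos, rpow_pos; auto. apply Rpower_mult. apply Rpower_pos.
Qed.

Lemma rpow_1 x : 0 <= x -> rpow x 1 = x.
Proof. intros [hx|hx]; [rewrite rpow_pos; auto; apply Rpower_1; auto| subst; apply rpow_0]. Qed.

Lemma rpow_le x y a : 0 <= x <= y -> 0 <= a -> rpow x a <= rpow y a.
Proof.
  intros [[hx|hx] hxy] ha; [|subst; rewrite rpow_0; apply rpow_ge0].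
  rewrite !rpow_pos; try lra. apply Rle_Rpower_l; lra.
Qed.

Lemma rpow_plus x a b : 0 <= x -> rpow x (a+b) = rpow x a * rpow x b.
Proof.
  intros [hx|hx]; [rewrite !rpow_pos; auto; apply Rpower_plus| subst; rewrite !rpow_0; ring].
Qed.

Lemma rpow_inv_r x r : 0 <= x -> 0 < r -> rpow (rpow x r) (1/r) = x.
Proof. intros; rewrite rpow_rpow; auto. replace (r*(1/r)) with 1 by (field; lra). now apply rpow_1. Qed.

Lemma rpow_1base a : rpow 1 a = 1.
Proof. rewrite rpow_pos by lra. unfold Rpower; rewrite ln_1, Rmult_0_r; apply exp_0. Qed.

Definition sumL (f : nat -> R) (l : list nat) := fold_right Rplus 0 (map f l).

Lemma Rsum_sumL n f : Rsum n f = sumL f (seq 0 n).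
Proof. reflexivity. Qed.

Lemma sumL_le f g l : (forall i, In i l -> f i <= g i) -> sumL f l <= sumL g l.
Proof. induction l; unfold sumL in *; simpl; intros H; [lra|].
  apply Rplus_le_compat; auto. Qed.

Lemma sumL_ge0 f l : (forall i, In i l -> 0 <= f i) -> 0 <= sumL f l.
Proof. induction l; unfold sumL in *; simpl; intros H; [lra|].
  apply Rplus_le_le_0_compat; auto. Qed.

Lemma sumL_zero f l : (forall i, In i l -> f i = 0) -> sumL f l = 0.
Proof. induction l; unfold sumL in *; simpl; intros H; [lra|].
  rewrite H, IHl; auto; ring. Qed.

Lemma sumL_affine a b f l : sumL (fun i => a + b * f i) l = a * INR (length l) + b * sumL f l.
Proof. induction l; unfold sumL in *; simpl; [ring|]. rewrite IHl.
  destruct (length l); [simpl; ring| rewrite S_INR; ring]. Qed.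

Lemma sumL_scal c f l : sumL (fun i => c * f i) l = c * sumL f l.
Proof. induction l; unfold sumL in *; simpl; [ring|]. rewrite IHl; ring. Qed.

Lemma sumL_abs f l : Rabs (sumL f l) <= sumL (fun i => Rabs (f i)) l.
Proof. induction l; unfold sumL in *; simpl; [rewrite Rabs_R0; lra|].
  eapply Rle_trans; [apply Rabs_triang|]; lra. Qed.

Lemma sumL_term f l i : (forall j, In j l -> 0 <= f j) -> In i l -> f i <= sumL f l.
Proof. induction l; unfold sumL in *; simpl; intros H Hi; [tauto|].
  destruct Hi as [<-|Hi].
  - assert (0 <= fold_right Rplus 0 (map f l)) by (apply (sumL_ge0 f l); auto). lra.
  - assert (0 <= f a) by auto. specialize (IHl (fun j h => H j (or_intror h)) Hi). lra. Qed.

Lemma sumL_ext f g l : (forall i, In i l -> f i = g i) -> sumL f l = sumL g l.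
Proof. induction l; unfold sumL in *; simpl; intros H; auto. rewrite H, IHl; auto. Qed.

Lemma in_seq0 i n : In i (seq 0 n) <-> (i < n)%nat.
Proof. rewrite in_seq; lia. Qed.

Definition maxL (f : nat -> R) (l : list nat) := fold_right Rmax 0 (map f l).

Lemma maxL_ge0 f l : 0 <= maxL f l.
Proof. destruct l; unfold maxL; simpl; [lra|]. induction l; simpl; [apply Rmax_r|]. eapply Rle_trans; [apply IHl|]. apply Rle_max_compat_l, Rmax_r. Qed.

Lemma maxL_term f l i : In i l -> f i <= maxL f l.
Proof. induction l; unfold maxL in *; simpl; intros Hi; [tauto|].
  destruct Hi as [<-|Hi]; [apply Rmax_l|]. eapply Rle_trans; [apply IHl; auto| apply Rmax_r]. Qed.

Lemma maxL_le f l B : 0 <= B -> (forall i, In i l -> f i <= B) -> maxL f l <= B.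
Proof. induction l; unfold maxL in *; simpl; intros HB H; auto. apply Rmax_lub; auto. Qed.

Lemma sumL_const k l : sumL (fun _ => k) l = INR (length l) * k.
Proof. induction l; unfold sumL in *; simpl; [ring|]. rewrite IHl.
  destruct (length l); [simpl; ring| rewrite S_INR; ring]. Qed.

Lemma maxL_scal k f l : 0 <= k -> maxL (fun i => k * f i) l = k * maxL f l.
Proof. intros hk; induction l; unfold maxL in *; simpl; [ring|]. rewrite IHl, RmaxRmult; auto. Qed.

Lemma seq0_S n : seq 0 (S n) = 0%nat :: seq 1 n.
Proof. reflexivity. Qed.

Lemma sumL_single c f n : (forall j, (j <> 0)%nat -> f j = 0) -> f 0%nat = c ->
  sumL f (seq 0 (S n)) = c.
Proof. intros H0 Hc. rewrite seq0_S. unfold sumL; simpl. fold (sumL f (seq 1 n)).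
  rewrite sumL_zero; [lra|]. intros i Hi; apply in_seq in Hi; apply H0; lia. Qed.

Section Norms.
Variable r : R.
Hypothesis hr : 0 < r.

Lemma pnorm_ge0 n a : 0 <= pnorm r n a.
Proof. apply rpow_ge0. Qed.

Lemma pnorm_term n a i : (i < n)%nat -> Rabs (a i) <= pnorm r n a.
Proof. intros hi. unfold pnorm. rewrite <- (rpow_inv_r (Rabs (a i)) r) at 1 by (auto; apply Rabs_pos).
  apply rpow_le; [split; [apply rpow_ge0|]|].
  - rewrite Rsum_sumL. apply (sumL_term (fun i => rpow (Rabs (a i)) r)).
    + intros; apply rpow_ge0.
    + apply in_seq0; auto.
  - unfold Rdiv; rewrite Rmult_1_l; left; apply Rinv_0_lt_compat; auto. Qed.

Lemma pnorm_mono n a b : (forall i, (i < n)%nat -> Rabs (a i) <= Rabs (b i)) ->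
  pnorm r n a <= pnorm r n b.
Proof. intros H. unfold pnorm. apply rpow_le.
  - split. apply sumL_ge0; intros; apply rpow_ge0.
    rewrite !Rsum_sumL; apply sumL_le; intros i Hi; apply in_seq0 in Hi.
    apply rpow_le; [split; [apply Rabs_pos| auto]| lra].
  - unfold Rdiv; rewrite Rmult_1_l; left; apply Rinv_0_lt_compat; auto. Qed.

Lemma pnorm_scal n c a : pnorm r n (fun i => c * a i) = Rabs c * pnorm r n a.
Proof. unfold pnorm. rewrite !Rsum_sumL.
  rewrite (sumL_ext _ (fun i => rpow (Rabs c) r * rpow (Rabs (a i)) r)).
  2:{ intros; rewrite Rabs_mult, rpow_mul; auto; apply Rabs_pos. }
  rewrite sumL_scal, rpow_mul, rpow_inv_r; auto. apply Rabs_pos. apply rpow_ge0.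
  apply sumL_ge0; intros; apply rpow_ge0. Qed.

Lemma pnorm_const n c : (1 <= n)%nat -> pnorm r n (fun _ => c) = Rpower (INR n) (1/r) * Rabs c.
Proof. intros hn. unfold pnorm. rewrite Rsum_sumL, sumL_const, length_seq.
  assert (0 < INR n) by (apply lt_0_INR; lia).
  rewrite rpow_mul, rpow_inv_r, rpow_pos; auto. apply Rabs_pos. lra. apply rpow_ge0. Qed.

Lemma pnorm_single n c : (1 <= n)%nat ->
  pnorm r n (fun j => if Nat.eqb j 0 then c else 0) = Rabs c.
Proof. intros hn. destruct n; [lia|]. unfold pnorm. rewrite Rsum_sumL.
  rewrite (sumL_single (rpow (Rabs c) r)). apply rpow_inv_r; auto; apply Rabs_pos.
  - intros j hj. destruct j; [lia|]. simpl. rewrite Rabs_R0; apply rpow_0.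
  - reflexivity. Qed.
End Norms.

Lemma sup_term n a i : (i < n)%nat -> Rabs (a i) <= supnorm n a.
Proof. intros; apply (maxL_term (fun i => Rabs (a i))); apply in_seq0; auto. Qed.

Lemma sup_mono n a b : (forall i, (i < n)%nat -> Rabs (a i) <= Rabs (b i)) ->
  supnorm n a <= supnorm n b.
Proof. intros H; apply maxL_le; [apply maxL_ge0|]. intros i Hi; apply in_seq0 in Hi.
  eapply Rle_trans; [apply H; auto| apply sup_term; auto]. Qed.

Lemma sup_scal n c a : supnorm n (fun i => c * a i) = Rabs c * supnorm n a.
Proof. unfold supnorm, Rmaxn. change (maxL (fun i => Rabs (c*a i)) (seq 0 n) = Rabs c * maxL (fun i => Rabs (a i)) (seq 0 n)). rewrite <- (maxL_scal (Rabs c) (fun i => Rabs (a i))) by apply Rabs_pos.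
  unfold maxL. f_equal. apply map_ext; intros; apply Rabs_mult. Qed.

Lemma sup_const n c : (1 <= n)%nat -> supnorm n (fun _ => c) = Rabs c.
Proof. intros hn. apply Rle_antisym.
  - apply maxL_le; [apply Rabs_pos| intros; lra].
  - apply (sup_term n (fun _ => c) 0); lia. Qed.

Lemma sup_single n c : (1 <= n)%nat -> supnorm n (fun j => if Nat.eqb j 0 then c else 0) = Rabs c.
Proof. intros hn. apply Rle_antisym.
  - apply maxL_le; [apply Rabs_pos|]. intros i _. destruct i; simpl; [lra|]. rewrite Rabs_R0; apply Rabs_pos.
  - apply (sup_term n (fun j => if Nat.eqb j 0 then c else 0) 0); lia. Qed.

Definition extpos (q : extR) := match q with Some q' => 0 < q' | None => True end.

Lemma qnorm_ge0 q n a : 0 <= qnorm q n a.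
Proof. destruct q; simpl; [apply rpow_ge0| apply maxL_ge0]. Qed.

Lemma qnorm_term q n a i : extpos q -> (i < n)%nat -> Rabs (a i) <= qnorm q n a.
Proof. destruct q; simpl; intros; [apply pnorm_term| apply sup_term]; auto. Qed.

Lemma qnorm_pos q n a i : extpos q -> (i < n)%nat -> a i <> 0 -> 0 < qnorm q n a.
Proof. intros. eapply Rlt_le_trans; [|apply qnorm_term; eauto]. apply Rabs_pos_lt; auto. Qed.

Lemma qnorm_mono q n a b : extpos q -> (forall i, (i < n)%nat -> Rabs (a i) <= Rabs (b i)) ->
  qnorm q n a <= qnorm q n b.
Proof. destruct q; simpl; intros; [apply pnorm_mono| apply sup_mono]; auto. Qed.

Lemma qnorm_scal q n c a : extpos q -> qnorm q n (fun i => c * a i) = Rabs c * qnorm q n a.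
Proof. destruct q; simpl; intros; [apply pnorm_scal| apply sup_scal]; auto. Qed.

Lemma qnorm_const q n c : extpos q -> (1 <= n)%nat ->
  qnorm q n (fun _ => c) = Rpower (INR n) (inv_ext q) * Rabs c.
Proof. destruct q; simpl; intros; [apply pnorm_const; auto|].
  rewrite Rpower_O, sup_const; auto; [ring| apply lt_0_INR; lia]. Qed.

Lemma qnorm_single q n c : extpos q -> (1 <= n)%nat ->
  qnorm q n (fun j => if Nat.eqb j 0 then c else 0) = Rabs c.
Proof. destruct q; simpl; intros; [apply pnorm_single| apply sup_single]; auto. Qed.

Lemma Rpower_1base z : Rpower 1 z = 1.
Proof. unfold Rpower; rewrite ln_1, Rmult_0_r; apply exp_0. Qed.

Lemma bernoulli y t : 0 <= y -> 1 <= t -> 1 + t * (y - 1) <= rpow y t.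
Proof.
  intros [hy|hy] ht; [|subst; rewrite rpow_0; nra].
  rewrite rpow_pos by auto.
  set (f := fun x => Rpower x t - t * x).
  set (f' := fun x => t * Rpower x (t - 1) - t * 1).
  assert (D : forall c, 0 < c -> derivable_pt_lim f c (f' c)).
  { intros c hc. unfold f, f'.
    apply (derivable_pt_lim_minus (fun x => Rpower x t) (mult_real_fct t id)).
    - apply derivable_pt_lim_power; auto.
    - apply derivable_pt_lim_scal, derivable_pt_lim_id. }
  assert (f1 : f 1 = 1 - t) by (unfold f; rewrite Rpower_1base; ring).
  destruct (Rtotal_order y 1) as [hl|[he|hg]].
  - destruct (MVT_cor2 f f' y 1 hl) as [c [Hc Hc']].
    { intros c hc; apply D; lra. }
    assert (HH : Rpower c (t-1) <= Rpower 1 (t-1)) by (apply Rle_Rpower_l; lra).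
    rewrite Rpower_1base in HH.
    assert (0 <= t*(1 - Rpower c (t-1))*(1-y)) by (apply Rmult_le_pos; [apply Rmult_le_pos|]; lra).
    unfold f' in Hc. rewrite f1 in Hc. unfold f in Hc. cbv beta in Hc. nra.
  - subst; rewrite Rpower_1base; lra.
  - destruct (MVT_cor2 f f' 1 y hg) as [c [Hc Hc']].
    { intros c hc; apply D; lra. }
    assert (HH : Rpower 1 (t-1) <= Rpower c (t-1)) by (apply Rle_Rpower_l; lra).
    rewrite Rpower_1base in HH.
    assert (0 <= t*(Rpower c (t-1) - 1)*(y-1)) by (apply Rmult_le_pos; [apply Rmult_le_pos|]; lra).
    unfold f' in Hc. rewrite f1 in Hc. unfold f in Hc. cbv beta in Hc. nra.
Qed.

Lemma pos_part_pos x : 0 <= x -> pos_part x = x.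
Proof. intros; unfold pos_part; apply Rmax_left; lra. Qed.
Lemma pos_part_neg x : x <= 0 -> pos_part x = 0.
Proof. intros; unfold pos_part; apply Rmax_right; lra. Qed.

Lemma pnorm_sup r s a : 0 < r -> supnorm s a <= pnorm r s a.
Proof. intros; apply maxL_le; [apply pnorm_ge0|]. intros i Hi; apply in_seq0 in Hi; apply pnorm_term; auto. Qed.

Lemma sum_rpow_pnorm q s a : 0 < q -> Rsum s (fun i => rpow (Rabs (a i)) q) = rpow (pnorm q s a) q.
Proof. intros hq. unfold pnorm. rewrite rpow_rpow. replace (1/q*q) with 1 by (field; lra).
  rewrite rpow_1; auto. apply sumL_ge0; intros; apply rpow_ge0. apply sumL_ge0; intros; apply rpow_ge0. Qed.

Lemma pnorm_le_big r q s a : 0 < q <= r -> pnorm r s a <= pnorm q s a.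
Proof. intros hq. set (N := pnorm q s a).
  assert (HN : 0 <= N) by apply pnorm_ge0.
  unfold pnorm at 1. rewrite <- (rpow_inv_r N r) by lra. apply rpow_le.
  2:{ unfold Rdiv; rewrite Rmult_1_l; left; apply Rinv_0_lt_compat; lra. }
  split. apply sumL_ge0; intros; apply rpow_ge0.
  replace (rpow N r) with (rpow N q * rpow N (r-q)) by (rewrite <- rpow_plus by auto; f_equal; ring).
  unfold N; rewrite <- sum_rpow_pnorm by lra. fold N.
  rewrite Rmult_comm, !Rsum_sumL, <- sumL_scal. apply sumL_le; intros i Hi; apply in_seq0 in Hi.
  replace (rpow (Rabs (a i)) r) with (rpow (Rabs (a i)) q * rpow (Rabs (a i)) (r-q)) by (rewrite <- rpow_plus by apply Rabs_pos; f_equal; ring).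
  rewrite Rmult_comm. apply Rmult_le_compat_r. apply rpow_ge0.
  apply rpow_le; [split; [apply Rabs_pos| apply pnorm_term; [lra|auto]]| lra].
Qed.

Lemma pnorm_le_small r q s a : (1 <= s)%nat -> 0 < r < q ->
  pnorm r s a <= rpow (INR s) (1/r - 1/q) * pnorm q s a.
Proof. intros hs hrq.
  assert (hS : 0 < INR s) by (apply lt_0_INR; lia).
  set (t := q / r).
  assert (ht : 1 < t) by (unfold t; apply (Rmult_lt_reg_r r); [lra|]; field_simplify; lra).
  set (A := Rsum s (fun i => rpow (Rabs (a i)) r)).
  set (X := Rsum s (fun i => rpow (Rabs (a i)) q)).
  assert (hA : 0 <= A) by (apply sumL_ge0; intros; apply rpow_ge0).
  assert (hX : 0 <= X) by (apply sumL_ge0; intros; apply rpow_ge0).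
  assert (HX : X = Rsum s (fun i => rpow (rpow (Rabs (a i)) r) t)).
  { unfold X; rewrite !Rsum_sumL; apply sumL_ext; intros.
    rewrite rpow_rpow by apply Rabs_pos. f_equal; unfold t; field; lra. }
  assert (claim : A <= rpow (INR s) (1 - 1/t) * rpow X (1/t)).
  { destruct hA as [hA|hA]; [|rewrite <- hA; apply Rmult_le_pos; apply rpow_ge0].
    set (m := A / INR s).
    assert (hm : 0 < m) by (unfold m; apply Rdiv_lt_0_compat; auto).
    assert (S1 : INR s <= rpow (/m) t * X).
    { rewrite HX, Rsum_sumL, <- sumL_scal.
      replace (INR s) with (sumL (fun i => (1 - t) + (t/m) * rpow (Rabs (a i)) r) (seq 0 s)).
      2:{ rewrite sumL_affine, length_seq. change (sumL (fun i => rpow (Rabs (a i)) r) (seq 0 s)) with A.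
          unfold m. field. lra. }
      apply sumL_le; intros i _.
      rewrite <- rpow_mul; [| left; apply Rinv_0_lt_compat; auto| apply rpow_ge0].
      eapply Rle_trans; [|apply bernoulli; [|lra]].
      + right; field; lra.
      + apply Rmult_le_pos; [left; apply Rinv_0_lt_compat; auto| apply rpow_ge0]. }
    assert (S2 : INR s * rpow m t <= X).
    { replace X with (rpow m t * (rpow (/m) t * X)).
      2:{ rewrite <- Rmult_assoc, <- rpow_mul; try lra. rewrite Rinv_r, rpow_1base; lra.
          left; apply Rinv_0_lt_compat; auto. }
      rewrite Rmult_comm. apply Rmult_le_compat_l; auto. apply rpow_ge0. }
    assert (S3 : rpow (INR s) (1/t) * m <= rpow X (1/t)).
    { replace (rpow (INR s) (1/t) * m) with (rpow (INR s * rpow m t) (1/t)).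
      2:{ rewrite rpow_mul, rpow_inv_r; try lra. apply rpow_ge0. }
      apply rpow_le. split; auto. apply Rmult_le_pos; [lra| apply rpow_ge0].
      unfold Rdiv; rewrite Rmult_1_l; left; apply Rinv_0_lt_compat; lra. }
    replace A with (rpow (INR s) (1 - 1/t) * (rpow (INR s) (1/t) * m)).
    2:{ rewrite <- Rmult_assoc, <- rpow_plus by lra. replace (1 - 1/t + 1/t) with 1 by ring.
        rewrite rpow_1 by lra. unfold m; field; lra. }
    apply Rmult_le_compat_l; auto. apply rpow_ge0. }
  unfold pnorm. fold A. fold X.
  eapply Rle_trans. apply rpow_le. split; [auto| apply claim].
  unfold Rdiv; rewrite Rmult_1_l; left; apply Rinv_0_lt_compat; lra.
  rewrite rpow_mul by apply rpow_ge0. rewrite !rpow_rpow by lra.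
  right; f_equal; f_equal; unfold t; field; lra.
Qed.

Definition extge1 (q : extR) := match q with Some q' => 1 <= q' | None => True end.

Lemma NI r q s a : extge1 r -> extge1 q -> (1 <= s)%nat ->
  qnorm r s a <= Rpower (INR s) (pos_part (inv_ext r - inv_ext q)) * qnorm q s a.
Proof. intros hr hq hs.
  assert (hS : 0 < INR s) by (apply lt_0_INR; lia).
  destruct r as [r|]; destruct q as [q|]; simpl in *.
  - destruct (Rle_lt_dec q r) as [h|h].
    + rewrite pos_part_neg.
      2:{ assert (/r <= /q) by (apply Rinv_le_contravar; lra). unfold Rdiv; lra. }
      rewrite Rpower_O by auto. rewrite Rmult_1_l. apply pnorm_le_big; lra.
    + rewrite pos_part_pos.
      2:{ assert (/q < /r) by (apply Rinv_lt_contravar; nra). unfold Rdiv; lra. }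
      rewrite <- rpow_pos by auto. apply pnorm_le_small; auto; lra.
  - rewrite Rminus_0_r, pos_part_pos.
    2:{ unfold Rdiv; rewrite Rmult_1_l; left; apply Rinv_0_lt_compat; lra. }
    eapply Rle_trans. apply (pnorm_mono r ltac:(lra) s a (fun _ => supnorm s a)).
    { intros i hi. rewrite (Rabs_pos_eq (supnorm s a)) by apply maxL_ge0. apply sup_term; auto. }
    rewrite pnorm_const by (auto; lra). rewrite Rabs_pos_eq by apply maxL_ge0. lra.
  - rewrite pos_part_neg.
    2:{ assert (0 < /q) by (apply Rinv_0_lt_compat; lra). unfold Rdiv; lra. }
    rewrite Rpower_O by auto. rewrite Rmult_1_l. apply pnorm_sup; lra.
  - rewrite pos_part_neg by lra. rewrite Rpower_O by auto. lra.
Qed.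

Lemma relu_abs y : Rabs (relu y) <= Rabs y.
Proof. unfold relu, Rmax. destruct (Rle_dec y 0).
  - rewrite Rabs_R0; apply Rabs_pos.
  - lra. Qed.

Section Main.
Variables (s1 n : nat) (eps : nat -> R) (G : nat -> nat -> R).

Definition F (v : nat -> R) := Rsum n (fun i => eps i * relu (Rsum s1 (fun k => v k * G i k))).
Definition K := Rsum n (fun i => Rabs (eps i) * Rsum s1 (fun k => Rabs (G i k))).

Lemma F_bound v M : (forall k, (k < s1)%nat -> Rabs (v k) <= M) -> Rabs (F v) <= K * M.
Proof. intros H. unfold F, K. rewrite Rmult_comm, !Rsum_sumL, <- sumL_scal.
  eapply Rle_trans; [apply sumL_abs|]. apply sumL_le; intros i _.
  rewrite Rabs_mult. rewrite <- Rmult_assoc, (Rmult_comm M), Rmult_assoc.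
  apply Rmult_le_compat_l; [apply Rabs_pos|].
  eapply Rle_trans; [apply relu_abs|]. rewrite !Rsum_sumL, <- sumL_scal.
  eapply Rle_trans; [apply sumL_abs|]. apply sumL_le; intros k Hk; apply in_seq0 in Hk.
  rewrite Rabs_mult. apply Rmult_le_compat_r; [apply Rabs_pos| auto]. Qed.

Lemma F0 v : (forall k, (k < s1)%nat -> v k = 0) -> F v = 0.
Proof. intros H. unfold F. rewrite Rsum_sumL. apply sumL_zero; intros i _.
  rewrite Rsum_sumL, sumL_zero. unfold relu; rewrite Rmax_left; lra.
  intros k Hk; apply in_seq0 in Hk; rewrite H; auto; ring. Qed.
End Main.

Lemma conj_ge1 p : 1 <= p -> extge1 (conj_exp p).
Proof. intros hp. unfold conj_exp. destruct (Req_EM_T p 1); simpl; auto.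
  replace (p/(p-1)) with (1 + /(p-1)) by (field; lra).
  assert (0 < /(p-1)) by (apply Rinv_0_lt_compat; lra). lra. Qed.

Lemma ge1_pos q : extge1 q -> extpos q.
Proof. destruct q; simpl; auto; lra. Qed.

Lemma inv_ext_ge0 q : extge1 q -> 0 <= inv_ext q.
Proof. destruct q; simpl; intros; [|lra]. unfold Rdiv; rewrite Rmult_1_l; left; apply Rinv_0_lt_compat; lra. Qed.

Theorem mainTheorem7
  (p : R) (q : extR) (s1 s2 m1 n : nat)
  (eps : nat -> R) (x : nat -> list R) (g : list R -> nat -> R)
  (Hp : 1 <= p)
  (Hq : match q with Some q' => 1 <= q' | None => True end)
  (Hs1 : (1 <= s1)%nat) (Hs2 : (1 <= s2)%nat) (Hm1 : (1 <= m1)%nat) (Hn : (1 <= n)%nat)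
  (Heps : forall i, (i < n)%nat -> eps i = 1 \/ eps i = -1)
  (Hx : forall i, (i < n)%nat -> length (x i) = m1) :
  exists S : R,
    is_lub (fun r => exists v : nat -> R,
              (exists k, (k < s1)%nat /\ v k <> 0) /\
              r = Rabs (Rsum n (fun i => eps i *
                        relu (Rsum s1 (fun k => v k * g (x i) k))))
                  / pnorm p s1 v) S /\
    is_lub (fun r => exists V : nat -> nat -> R,
              (exists k j, (k < s1)%nat /\ (j < s2)%nat /\ V k j <> 0) /\
              r = qnorm (conj_exp p) s2
                    (fun j => Rsum n (fun i => eps i *
                        relu (Rsum s1 (fun k => V k j * g (x i) k))))
                  / mixed_norm p q s1 s2 V)
      (Rpower (INR s2) (pos_part (inv_ext (conj_exp p) - inv_ext q)) * S).
Proof.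
  set (G := fun i k => g (x i) k).
  change (fun i k => g (x i) k) with G.
  fold (F s1 n eps G).
  assert (hp : 0 < p) by lra.
  set (E1 := fun r => exists v : nat -> R, (exists k, (k < s1)%nat /\ v k <> 0) /\
             r = Rabs (F s1 n eps G v) / pnorm p s1 v).
  assert (Ppos : forall v, (exists k, (k < s1)%nat /\ v k <> 0) -> 0 < pnorm p s1 v).
  { intros v [k [hk hv]]. eapply Rlt_le_trans; [|apply pnorm_term; eauto]. apply Rabs_pos_lt; auto. }
  assert (Hb : bound E1).
  { exists (K s1 n eps G). intros r [v [hv ->]].
    assert (hP := Ppos v hv).
    apply (Rmult_le_reg_r (pnorm p s1 v)); auto. unfold Rdiv; rewrite Rmult_assoc, Rinv_l by lra.
    rewrite Rmult_1_r. apply F_bound. intros; apply pnorm_term; auto. }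
  assert (Hne : exists r, E1 r).
  { exists (Rabs (F s1 n eps G (fun _ => 1)) / pnorm p s1 (fun _ => 1)).
    exists (fun _ => 1); split; auto. exists 0%nat; split; [lia| lra]. }
  destruct (completeness E1 Hb Hne) as [C HC].
  assert (HC0 : 0 <= C).
  { destruct Hne as [r0 Hr0]. pose proof (proj1 HC r0 Hr0) as H1.
    destruct Hr0 as [v [hv Er]]. assert (0 <= r0).
    { rewrite Er. unfold Rdiv; apply Rmult_le_pos; [apply Rabs_pos| left; apply Rinv_0_lt_compat; auto]. }
    lra. }
  assert (FC : forall v, Rabs (F s1 n eps G v) <= C * pnorm p s1 v).
  { intros v. destruct (classic (exists k, (k < s1)%nat /\ v k <> 0)) as [hv|hv].
    - assert (hP := Ppos v hv).
      assert (Rabs (F s1 n eps G v) / pnorm p s1 v <= C) by (apply (proj1 HC); exists v; auto).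
      apply (Rmult_le_compat_r (pnorm p s1 v)) in H; [|lra].
      unfold Rdiv in H; rewrite Rmult_assoc, Rinv_l, Rmult_1_r in H; lra.
    - rewrite F0. rewrite Rabs_R0. apply Rmult_le_pos; auto; apply pnorm_ge0.
      intros k hk. destruct (Req_dec (v k) 0); auto. exfalso; apply hv; eauto. }
  exists C. split; [exact HC|].
  assert (hr := conj_ge1 p Hp).
  set (r := conj_exp p) in *.
  set (e := pos_part (inv_ext r - inv_ext q)).
  assert (hS : 0 < INR s2) by (apply lt_0_INR; lia).
  assert (hT : 0 < Rpower (INR s2) e) by apply Rpower_pos.
  split.
  - intros rho [V [[k [j [hk [hj hV]]]] ->]].
    set (nn := fun j => pnorm p s1 (fun k => V k j)).
    unfold mixed_norm. fold nn.
    assert (hm : 0 < qnorm q s2 nn).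
    { apply (qnorm_pos q s2 nn j); [apply ge1_pos; auto| auto|].
      apply Rgt_not_eq, Ppos; eauto. }
    apply (Rmult_le_reg_r (qnorm q s2 nn)); auto. unfold Rdiv; rewrite Rmult_assoc, Rinv_l, Rmult_1_r by lra.
    eapply Rle_trans.
    { apply (qnorm_mono r s2 _ (fun j => C * nn j)); [apply ge1_pos; auto|].
      intros j' hj'. rewrite Rabs_mult, (Rabs_pos_eq C), (Rabs_pos_eq (nn j')) by (auto; apply pnorm_ge0).
      apply FC. }
    rewrite qnorm_scal, Rabs_pos_eq by (auto; apply ge1_pos; auto).
    rewrite (Rmult_comm (Rpower _ _) C), Rmult_assoc.
    apply Rmult_le_compat_l; auto. apply NI; auto.
  - intros b Hb2.
    assert (HCb : C <= b / Rpower (INR s2) e).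
    { apply (proj2 HC). intros rho [v [hv ->]].
      assert (hP := Ppos v hv).
      apply (Rmult_le_reg_l (Rpower (INR s2) e)); auto.
      replace (Rpower (INR s2) e * (b / Rpower (INR s2) e)) with b by (field; lra).
      apply Hb2.
      destruct (Rle_lt_dec e 0) as [he|he].
      - assert (e = 0) by (unfold e, pos_part in *; assert (H := Rmax_r (inv_ext r - inv_ext q) 0); lra).
        rewrite H, Rpower_O by auto.
        exists (fun k j => if Nat.eqb j 0 then v k else 0). split.
        { destruct hv as [k [hk hv]]. exists k, 0%nat; simpl; repeat split; auto; lia. }
        unfold mixed_norm.
        replace (fun j => Rsum n (fun i => eps i * relu (Rsum s1 (fun k => (if Nat.eqb j 0 then v k else 0) * g (x i) k))))
          with (fun j => if Nat.eqb j 0 then F s1 n eps G v else 0).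
        2:{ apply functional_extensionality; intros [|j]; simpl; auto.
            symmetry; apply (F0 s1 n eps G (fun _ => 0)); auto. }
        replace (fun j => pnorm p s1 (fun k => if Nat.eqb j 0 then v k else 0))
          with (fun j => if Nat.eqb j 0 then pnorm p s1 v else 0).
        2:{ apply functional_extensionality; intros [|j]; simpl; auto.
            rewrite pnorm_const by auto. rewrite Rabs_R0; ring. }
        rewrite !qnorm_single by (auto; apply ge1_pos; auto).
        rewrite (Rabs_pos_eq (pnorm p s1 v)) by apply pnorm_ge0. unfold F, G; ring.
      - exists (fun k j => v k). split.
        { destruct hv as [k [hk hv]]. exists k, 0%nat; repeat split; auto; lia. }
        unfold mixed_norm.
        rewrite !qnorm_const by (auto; apply ge1_pos; auto).
        replace (pnorm p s1 (fun i => v i)) with (pnorm p s1 v) by reflexivity.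
        change (Rsum n (fun i => eps i * relu (Rsum s1 (fun k => v k * g (x i) k)))) with (F s1 n eps G v).
        rewrite (Rabs_pos_eq (pnorm p s1 v)) by apply pnorm_ge0.
        assert (Ee : e = inv_ext r - inv_ext q).
        { unfold e, pos_part in *. destruct (Rle_dec (inv_ext r - inv_ext q) 0).
          - rewrite Rmax_right in he; lra.
          - rewrite Rmax_left; lra. }
        replace (Rpower (INR s2) (inv_ext r)) with (Rpower (INR s2) e * Rpower (INR s2) (inv_ext q))
          by (rewrite <- Rpower_plus; f_equal; lra).
        assert (0 < Rpower (INR s2) (inv_ext q)) by apply Rpower_pos.
        field; lra. }
    apply (Rmult_le_compat_l (Rpower (INR s2) e)) in HCb; [|lra].
    replace (Rpower (INR s2) e * (b / Rpower (INR s2) e)) with b in HCb by (field; lra). exact HCb.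
Qed.
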